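(* Let $\Delta\in\mathcal{H}_{\ge3}$ be a hypergraph on $[d]$ and let $F=F_\sim\wedge F_{\not\sim}$ be a consistent formula on $[d]$. Then there is a unique hypergraph $\Delta_F$ on the vertex set $[d]/F$ that is minimal (with respect to $\le$) among the hypergraphs $\widetilde\Delta$ on $[d]/F$ satisfying: (1) for every $e\in\Delta$ with $|\{\bar i_F: i\in e\}|\ge3$ there is $e'\in\widetilde\Delta$ with $\{\bar i_F:i\in e\}\subseteq e'$; (2) there is no atom $(c_1\not\sim c_2)$ of $F_{\not\sim}$ and no pair of distinct edges $e_1,e_2\in\widetilde\Delta$ with $\{\bar{c_1}_F,\bar{c_2}_F\}\subseteq e_1\cap e_2$. Moreover $\Delta_F=(\Delta_{F_\sim})_{F_{\not\sim}}$.
   Context: A hypergraph on a finite vertex set $V$ is a collection of subsets of $V$ (edges) none properly contained in another; $\Delta_1\le\Delta_2$ means every edge of $\Delta_1$ is contained in some edge of $\Delta_2$; $\mathcal{H}_{\ge3}$ denotes hypergraphs all of whose edges have size $\ge3$. A formula on $[d]$ is a conjunction of atoms $(x\sim y)$ and $(x\not\sim y)$ with $x\neq y\in[d]$; $F_\sim$ is the conjunction of its $\sim$-atoms and $F_{\not\sim}$ that of its $\not\sim$-atoms. The $\sim$-atoms generate an equivalence relation on $[d]$, with set of classes $[d]/F$ and class $\bar i_F$ of $i$; $F$ is consistent if no atom $(i\not\sim j)$ has $\bar i_F=\bar j_F$. $\Delta_{F_\sim}$ is the hypergraph on $[d]/F$ consisting of the inclusion-maximal sets among $\{\bar i_F:i\in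 e\}$, for $e\in\Delta$ with $|\{\bar i_F:i\in e\}|\ge3$. For a hypergraph $\Gamma$ on $[d]/F$ with edges of size $\ge3$, $\Gamma_{F_{\not\sim}}$ denotes the unique minimal (for $\le$) hypergraph $\Gamma'$ on $[d]/F$ with $\Gamma\le\Gamma'$ such that no atom $(c_1\not\sim c_2)$ of $F_{\not\sim}$ and no two distinct edges $e_1,e_2\in\Gamma'$ satisfy $\{\bar{c_1}_F,\bar{c_2}_F\}\subseteq e_1\cap e_2$ (this exists and is unique). *)

(* Defs.v *)
From mathcomp Require Import all_boot.
Set Implicit Arguments. Unset Strict Implicit. Unset Printing Implicit Defensive.

Section Hypergraphs.
Variable T : finType.

Definition is_hypergraph (V : {set T}) (H : {set {set T}}) : Prop :=
  (forall e, e \in H -> e \subset V) /\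
  (forall e1 e2, e1 \in H -> e2 \in H -> e1 \subset e2 -> e1 = e2).

Definition hle (H1 H2 : {set {set T}}) : Prop :=
  forall e1, e1 \in H1 -> exists2 e2, e2 \in H2 & e1 \subset e2.

Definition is_hypergraph_ge3 (V : {set T}) (H : {set {set T}}) : Prop :=
  is_hypergraph V H /\ (forall e, e \in H -> 3 <= #|e|).

Definition maxsets (S : {set {set T}}) : {set {set T}} :=
  [set s in S | [forall t in S, (s \subset t) ==> (s == t)]].

Definition hminimal (V : {set T}) (P : {set {set T}} -> Prop)
    (H : {set {set T}}) : Prop :=
  [/\ is_hypergraph V H, P H &
      forall H', is_hypergraph V H' -> P H' -> hle H' H -> H' = H].
End Hypergraphs.

(** Formulas on [d]: F_sim is a list of atoms (x ~ y), F_nsim a list of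
    atoms (x !~ y), each given as a pair (x, y) with x <> y. *)
Definition atoms_ok (d : nat) (A : seq ('I_d * 'I_d)) : Prop :=
  forall a, a \in A -> a.1 != a.2.

(** symmetric relation given by the ~-atoms; its reflexive-transitive
    closure [connect] is the generated equivalence relation. *)
Definition sim_rel (d : nat) (Fs : seq ('I_d * 'I_d)) : rel 'I_d :=
  fun x y => ((x, y) \in Fs) || ((y, x) \in Fs).

Definition cls (d : nat) (Fs : seq ('I_d * 'I_d)) (i : 'I_d) : {set 'I_d} :=
  [set j | connect (sim_rel Fs) i j].

Definition quot (d : nat) (Fs : seq ('I_d * 'I_d)) : {set {set 'I_d}} :=
  [set cls Fs i | i : 'I_d].

Definition img (d : nat) (Fs : seq ('I_d * 'I_d)) (e : {set 'I_d})
  : {set {set 'I_d}} := [set cls Fs i | i in e].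

Definition consistent (d : nat) (Fs Fn : seq ('I_d * 'I_d)) : Prop :=
  forall a, a \in Fn -> cls Fs a.1 <> cls Fs a.2.

Definition hsim (d : nat) (Fs : seq ('I_d * 'I_d)) (D : {set {set 'I_d}})
  : {set {set {set 'I_d}}} :=
  maxsets [set img Fs e | e in D & 3 <= #|img Fs e|].

Definition cond1 (d : nat) (Fs : seq ('I_d * 'I_d)) (D : {set {set 'I_d}})
    (H : {set {set {set 'I_d}}}) : Prop :=
  forall e, e \in D -> 3 <= #|img Fs e| ->
    exists2 e', e' \in H & img Fs e \subset e'.

Definition cond2 (d : nat) (Fs Fn : seq ('I_d * 'I_d))
    (H : {set {set {set 'I_d}}}) : Prop :=
  forall c, c \in Fn -> forall e1 e2, e1 \in H -> e2 \in H -> e1 <> e2 ->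
    ~ ([set cls Fs c.1; cls Fs c.2] \subset e1 :&: e2).

Definition is_nsim_closure (d : nat) (Fs Fn : seq ('I_d * 'I_d))
    (G G' : {set {set {set 'I_d}}}) : Prop :=
  hminimal (quot Fs) (fun H => hle G H /\ cond2 Fs Fn H) G'.

(* Main.v *)
Require Import Defs.
From mathcomp Require Import all_boot.

Set Implicit Arguments. Unset Strict Implicit. Unset Printing Implicit Defensive.

Section Gen.
Variable T : finType.
Variable S0 : {set {set T}}.
Variable ps : seq {set T}.
Definition pc (X Y : {set T}) : bool := has (fun p : {set T} => p \subset X :&: Y) ps.
Definition Fop (S : {set {set T}}) : {set {set T}} :=
  S0 :|: [set X :|: Y | X in S, Y in S & pc X Y].

Lemma Fop_mono : {homo Fop : X Y / X \subset Y}.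
Proof.
move=> A B sAB; apply/subsetP=> Z; rewrite !inE => /orP[->//|].
case/imset2P=> X Y XA; rewrite inE => /andP[YA pXY] ->.
apply/orP; right; apply/imset2P; exists X Y => //; first exact: (subsetP sAB).
by rewrite inE (subsetP sAB).
Qed.

Definition forced := fixset Fop.

Lemma forced_S0 s : s \in S0 -> s \in forced.
Proof. by move=> sS; rewrite /forced -(fixsetK Fop_mono) inE sS. Qed.

Lemma forced_U X Y : X \in forced -> Y \in forced -> pc X Y -> X :|: Y \in forced.
Proof.
move=> XF YF p; rewrite /forced -(fixsetK Fop_mono) inE; apply/orP; right.
by apply/imset2P; exists X Y => //; rewrite inE YF.
Qed.

Lemma forced_min (G : {set {set T}}) :
  (forall s, s \in S0 -> s \in G) ->
  (forall X Y, X \in G -> Y \in G -> pc X Y -> X :|: Y \in G) ->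
  forced \subset G.
Proof.
move=> h0 hU; rewrite /forced /fixset.
elim: #|_| => [|k IH] /=; first exact: sub0set.
apply/subsetP=> Z; rewrite inE => /orP[/h0//|].
case/imset2P=> X Y XA; rewrite inE => /andP[YA pXY] ->.
by apply: hU => //; apply: (subsetP IH).
Qed.

Definition DFg := maxsets forced.

Lemma maxsetsP (S : {set {set T}}) X :
  X \in maxsets S = (X \in S) && [forall t in S, (X \subset t) ==> (X == t)].
Proof. by rewrite inE. Qed.

Lemma maxsets_sub (S : {set {set T}}) X : X \in maxsets S -> X \in S.
Proof. by rewrite maxsetsP => /andP[]. Qed.


Lemma maxsets_max (S : {set {set T}}) X Y :
  X \in maxsets S -> Y \in S -> X \subset Y -> X = Y.
Proof.
rewrite maxsetsP => /andP[_ /forallP /(_ Y)] h YS sXY.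
by move: h; rewrite YS sXY /= => /eqP.
Qed.

Lemma maxsets_ex (S : {set {set T}}) X : X \in S ->
  exists2 Y, Y \in maxsets S & X \subset Y.
Proof.
move=> XS; have [A mA sXA] := @maxset_exists T (fun B => B \in S) X XS.
exists A => //; rewrite maxsetsP (maxsetp mA); apply/forallP=> t.
apply/implyP=> tS; apply/implyP=> sAt.
by rewrite (maxsetsup mA tS sAt).
Qed.

Lemma maxsets_anti (S : {set {set T}}) X Y :
  X \in maxsets S -> Y \in maxsets S -> X \subset Y -> X = Y.
Proof. by move=> mX /maxsets_sub; apply: maxsets_max. Qed.

Definition Pgen (H : {set {set T}}) : Prop :=
  (forall s, s \in S0 -> exists2 e, e \in H & s \subset e) /\
  (forall e1 e2, e1 \in H -> e2 \in H -> pc e1 e2 -> e1 = e2).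

Lemma DFg_P : Pgen DFg.
Proof.
split.
  move=> s /forced_S0 h; exact: maxsets_ex h.
move=> e1 e2 m1 m2 p.
have U := forced_U (maxsets_sub m1) (maxsets_sub m2) p.
by rewrite [LHS](maxsets_max m1 U (subsetUl _ _)) [RHS](maxsets_max m2 U (subsetUr _ _)).
Qed.

Lemma DFg_least H : Pgen H -> hle DFg H.
Proof.
case=> h1 h2 X /maxsets_sub XF.
have sub : forced \subset [set Z : {set T} | [exists e in H, Z \subset e]].
  apply: forced_min.
    by move=> s /h1 [e eH se]; rewrite inE; apply/existsP; exists e; rewrite eH.
  move=> A B; rewrite !inE => /existsP[e1 /andP[eH1 s1]] /existsP[e2 /andP[eH2 s2]] p.
  have E : e1 = e2.
    apply: h2 => //; case/hasP: p => q qps sq; apply/hasP; exists q => //.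
    by apply: (subset_trans sq); apply: setISS.
  subst e2; apply/existsP; exists e1; by rewrite eH1 subUset s1 s2.
move: (subsetP sub X XF); rewrite inE => /existsP[e /andP[eH sXe]]; by exists e.
Qed.

Lemma hle_anti V (A B : {set {set T}}) : is_hypergraph V A -> is_hypergraph V B ->
  hle A B -> hle B A -> A = B.
Proof.
move=> [_ aA] [_ aB] AB BA.
have K: forall (A B : {set {set T}}), (forall e1 e2, e1 \in A -> e2 \in A -> e1 \subset e2 -> e1 = e2) ->
   hle A B -> hle B A -> A \subset B.
  move=> A' B' aA' AB' BA'; apply/subsetP=> x xA.
  have [y yB sxy] := AB' x xA; have [z zA syz] := BA' y yB.
  have xz := aA' x z xA zA (subset_trans sxy syz); subst z.
  suff -> : x = y by [].
  by apply/eqP; rewrite eqEsubset sxy.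
by apply/eqP; rewrite eqEsubset !K.
Qed.

Variable V : {set T}.
Hypothesis S0V : forall s, s \in S0 -> s \subset V.

Lemma DFg_hyp : is_hypergraph V DFg.
Proof.
split; last by move=> e1 e2; apply: maxsets_anti.
move=> e /maxsets_sub eF.
have sub : forced \subset [set Z : {set T} | Z \subset V].
  apply: forced_min; first by move=> s /S0V; rewrite inE.
  by move=> X Y; rewrite !inE => sX sY _; rewrite subUset sX sY.
by move: (subsetP sub e eF); rewrite inE.
Qed.

Lemma gen_main (P : {set {set T}} -> Prop) :
  (forall H, is_hypergraph V H -> (P H <-> Pgen H)) ->
  hminimal V P DFg /\ (forall DF', hminimal V P DF' -> DF' = DFg).
Proof.
move=> eqP; have hD := DFg_hyp; have PD : P DFg by apply/eqP => //; exact: DFg_P.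
split.
  split=> // H' hH' PH' le.
  apply: (hle_anti hH' hD le); apply: DFg_least; exact/eqP.
move=> DF' [hD' PD' mD']; symmetry; apply: mD' => //.
apply: DFg_least; exact/eqP.
Qed.
End Gen.

Section Inst.
Variables (d : nat) (D : {set {set 'I_d}}) (Fs Fn : seq ('I_d * 'I_d)).
Let S0 := [set img Fs e | e in D & 3 <= #|img Fs e|].
Let ps := [seq [set cls Fs c.1; cls Fs c.2] | c <- Fn].

Lemma S0V s : s \in S0 -> s \subset quot Fs.
Proof.
case/imsetP=> e _ ->; apply/subsetP=> x /imsetP[i _ ->].
by apply/imsetP; exists i.
Qed.

Lemma c1_eq H : cond1 Fs D H <->
  (forall s, s \in S0 -> exists2 e, e \in H & s \subset e).
Proof.
split.
  by move=> h s /imsetP[e]; rewrite inE => /andP[eD c] ->; apply: h.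
by move=> h e eD c; apply: h; apply/imsetP; exists e; rewrite // inE eD.
Qed.

Lemma c2_eq H : cond2 Fs Fn H <->
  (forall e1 e2, e1 \in H -> e2 \in H -> pc ps e1 e2 -> e1 = e2).
Proof.
split.
  move=> h e1 e2 H1 H2 /hasP[p /mapP[c cF ->] sp].
  by case: (eqVneq e1 e2) => // ne; case: (h c cF e1 e2 H1 H2 (elimN eqP ne)).
move=> h c cF e1 e2 H1 H2 ne sp; apply: ne; apply: h => //.
by apply/hasP; exists [set cls Fs c.1; cls Fs c.2] => //; apply: map_f.
Qed.

Lemma hsim_eq H : hle (hsim Fs D) H <->
  (forall s, s \in S0 -> exists2 e, e \in H & s \subset e).
Proof.
split.
  move=> h s sS; have [m mM sm] := maxsets_ex sS.
  have [e eH me] := h m mM; exists e => //; exact: subset_trans sm me.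
by move=> h m /maxsets_sub; apply: h.
Qed.
End Inst.

Theorem mainTheorem5 (d : nat) (D : {set {set 'I_d}})
    (Fs Fn : seq ('I_d * 'I_d)) :
  is_hypergraph_ge3 [set: 'I_d] D ->
  atoms_ok Fs -> atoms_ok Fn ->
  consistent Fs Fn ->
  exists DF : {set {set {set 'I_d}}},
    [/\ hminimal (quot Fs) (fun H => cond1 Fs D H /\ cond2 Fs Fn H) DF,
        (forall DF', hminimal (quot Fs)
                       (fun H => cond1 Fs D H /\ cond2 Fs Fn H) DF' -> DF' = DF),
        is_nsim_closure Fs Fn (hsim Fs D) DF &
        (forall G', is_nsim_closure Fs Fn (hsim Fs D) G' -> G' = DF)].
Proof.
move=> _ _ _ _.
set S0 := [set img Fs e | e in D & 3 <= #|img Fs e|].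
set ps := [seq [set cls Fs c.1; cls Fs c.2] | c <- Fn].
have S0V' : forall s, s \in S0 -> s \subset quot Fs by exact: S0V.
have [A1 A2] := @gen_main _ S0 ps (quot Fs) S0V'
  (fun H => cond1 Fs D H /\ cond2 Fs Fn H)
  (fun H _ => conj (fun '(conj a b) => conj (proj1 (c1_eq D Fs H) a) (proj1 (c2_eq Fs Fn H) b))
                   (fun '(conj a b) => conj (proj2 (c1_eq D Fs H) a) (proj2 (c2_eq Fs Fn H) b))).
have [B1 B2] := @gen_main _ S0 ps (quot Fs) S0V'
  (fun H => hle (hsim Fs D) H /\ cond2 Fs Fn H)
  (fun H _ => conj (fun '(conj a b) => conj (proj1 (hsim_eq D Fs H) a) (proj1 (c2_eq Fs Fn H) b))
                   (fun '(conj a b) => conj (proj2 (hsim_eq D Fs H) a) (proj2 (c2_eq Fs Fn H) b))).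
by exists (DFg S0 ps); split.
Qed.
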